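(* For every odd positive integer $n$ and every $D > 1$, there is an instance of colorful $k$-center with $8n$ points, $k=n$, and $r=b=2n$, such that every solution has radius at least $D$, yet the polytope of LP1 with unit radius for this instance is not recognized as infeasible by $\Omega(n)$ rounds of the Sum-of-Squares hierarchy: there is a constant $c>0$ (independent of $n$ and $D$) such that for every $t \le cn$ the $t$-th SoS lifted polytope $SoS^t(K)$ of the LP1 polytope $K$ is nonempty. Consequently the integrality gap of LP1 with $8n$ points persists (is unbounded) up to $\Omega(n)$ rounds of Sum-of-Squares.
   Context: An instance of colorful $k$-center consists of a finite set $P$ of points with a metric $d$, a partition $P=R\cup B$ into red and blue points, and integers $k,r,b\ge0$; with $\mathcal{B}(j,\rho)=\{p\in P:d(j,p)\le\rho\}$, a solution of radius $\rho$ is $C\subseteq P$, $|C|\le k$, with $\bigcup_{c\in C}\mathcal{B}(c,\rho)$ containing at least $r$ red and $b$ blue points. LP1 (unit radius, $\mathcal{B}(j)=\mathcal{B}(j,1)$) is the polytope $K$ of vectors $(x,z)\in[0,1]^{P}\times[0,1]^P$ with $\sum_{i\in\mathcal{B}(j)}x_i\ge z_j$ for all $j\in P$, $\sum_{i\in P}x_i\le k$, $\sum_{j\in R}z_j\ge r$, $\sum_{j\in B}z_j\ge b$. Sum-of-Squares: let $V$ be the variable set, $K=\{v\in[0,1]^V: g_\ell(v)\ge0,\ \ell=1,\dots,m\}$ with linear $g_\ell$. $\mathcal{P}_t(V)$ denotes subsets of $V$ of size at most $t$. For $y\in\mathbb{R}^{\mathcal{P}(V)}$ and $g(v)=\sum_{I\subseteq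 V} a_I\prod_{i\in I}v_i$, $(g*y)_I=\sum_{J\subseteq V}a_J y_{I\cup J}$. For a collection $\mathcal{T}$ of subsets, $M_{\mathcal{T}}(y)$ is the matrix indexed by $\mathcal{T}$ with $(M_{\mathcal{T}}(y))_{I,J}=y_{I\cup J}$. The $t$-th SoS lifted polytope $SoS^t(K)$ is the set of $y\in[0,1]^{\mathcal{P}_{2t}(V)}$ with $y_\emptyset=1$, $M_{\mathcal{P}_t(V)}(y)\succeq0$, and $M_{\mathcal{P}_{t-1}(V)}(g_\ell*y)\succeq0$ for all $\ell$. *)

(* Defs.v *)
From Stdlib Require List.
From HB Require Import structures.
From mathcomp Require Import all_boot all_order all_algebra.
From mathcomp Require Import reals.
Set Implicit Arguments. Unset Strict Implicit. Unset Printing Implicit Defensive.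
Import Order.TTheory GRing.Theory Num.Theory.
Local Open Scope ring_scope.

Section ColorfulKCenter.
Variable R : realType.
Variable T : finType.

Definition is_metric (d : T -> T -> R) : Prop :=
  [/\ forall x y, 0 <= d x y,
      forall x y, d x y = 0 <-> x = y,
      forall x y, d x y = d y x &
      forall x y z, d x z <= d x y + d y z].

Definition ball (d : T -> T -> R) (j : T) (rho : R) : {set T} :=
  [set p | d j p <= rho].

Definition covered (d : T -> T -> R) (C : {set T}) (rho : R) : {set T} :=
  \bigcup_(c in C) ball d c rho.

Definition is_solution (d : T -> T -> R) (Red : {set T}) (k r b : nat)
    (C : {set T}) (rho : R) : Prop :=
  [/\ (#|C| <= k)%N,
      (r <= #|covered d C rho :&: Red|)%N &
      (b <= #|covered d C rho :&: ~: Red|)%N].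

(* LP1 variables: inl i = x_i, inr j = z_j *)
Definition LPvar := (T + T)%type.

(* a linear polynomial g(v) = a0 + sum_v a_v v *)
Definition linform := (R * (LPvar -> R))%type.

Definition lin_shift (g : linform) (y : {set LPvar} -> R) : {set LPvar} -> R :=
  fun I => g.1 * y I + \sum_(v : LPvar) g.2 v * y (v |: I).

(* the constraints g_l >= 0 of LP1 with unit radius (box constraints [0,1]
   are handled separately, as in the definition of K) *)
Definition LP1_constraints (d : T -> T -> R) (Red : {set T}) (k r b : nat)
    : seq linform :=
  [seq (0, fun v : LPvar => match v with
                          | inl i => if d j i <= 1 then 1 else 0
                          | inr j' => if j' == j then -1 else 0
                          end) | j <- enum T]
  ++ [:: (k%:R, fun v : LPvar => match v with inl _ => -1 | inr _ => 0 end);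
         (- r%:R, fun v : LPvar => match v with
                                  | inl _ => 0
                                  | inr j => if j \in Red then 1 else 0 end);
         (- b%:R, fun v : LPvar => match v with
                                  | inl _ => 0
                                  | inr j => if j \in Red then 0 else 1 end)].

Definition psd_on (S : pred {set LPvar}) (M : {set LPvar} -> {set LPvar} -> R)
    : Prop :=
  forall w : {set LPvar} -> R,
    0 <= \sum_(I | S I) \sum_(J | S J) w I * M I J * w J.

(* y in SoS^t(K), K given by the linear constraints gs and the box;
   y is a function on all subsets, only the entries of size <= 2t matter *)
Definition in_SoS (t : nat) (gs : seq linform) (y : {set LPvar} -> R) : Prop :=
  [/\ y set0 = 1,
      forall I : {set LPvar}, (#|I| <= 2 * t)%N -> 0 <= y I <= 1,
      psd_on (fun I => (#|I| <= t)%N) (fun I J => y (I :|: J)) &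
      forall g, Stdlib.Lists.List.In g gs ->
        psd_on (fun I => (#|I| <= t.-1)%N) (fun I J => lin_shift g y (I :|: J))].

Definition SoS_nonempty (t : nat) (gs : seq linform) : Prop :=
  exists y, in_SoS t gs y.

End ColorfulKCenter.

(* Main.v *)
Require Import Defs.
From HB Require Import structures.
From mathcomp Require Import all_boot all_order all_algebra.
From mathcomp Require Import reals.
From mathcomp Require Import ring lra zify.
Set Implicit Arguments. Unset Strict Implicit. Unset Printing Implicit Defensive.
Import Order.TTheory GRing.Theory Num.Theory.
Local Open Scope ring_scope.

(* Proof: Grigoriev-style pseudo-expectation for the knapsack
   constraint sum x = n/2 (n odd), pulled back to the LP1 variables of a
   clustered colorful k-center instance. *)

Section Core.
Variable R : realFieldType.
Variable m : nat.

Definition rr : R := m%:R / 2.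
Definition ff (z : R) k := \prod_(i < k) (z - i%:R).
Definition hh a b := ff rr a * ff rr b / ff m%:R (a + b).

Lemma ffS z k : ff z k.+1 = ff z k * (z - k%:R).
Proof. by rewrite /ff big_ord_recr. Qed.

Lemma ff0 z : ff z 0 = 1.
Proof. by rewrite /ff big_ord0. Qed.

Lemma ffm_gt0 k : (k <= m)%N -> 0 < ff m%:R k.
Proof.
elim: k => [|k IH] hk; first by rewrite ff0.
rewrite ffS mulr_gt0 ?IH 1?ltnW // subr_gt0 ltr_nat; lia.
Qed.

Lemma ffr_gt0 k : (2 * k <= m.+1)%N -> 0 < ff rr k.
Proof.
elim: k => [|k IH] hk; first by rewrite ff0.
rewrite ffS mulr_gt0 ?IH //; first by lia.
rewrite subr_gt0 /rr ltr_pdivlMr // -natrM ltr_nat; lia.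
Qed.

Lemma hh_rec a b : (a + b < m)%N -> hh a b = hh a.+1 b + hh a b.+1.
Proof.
move=> hab; rewrite /hh addSn addnS !ffS.
have h1 : ff m%:R (a + b) != 0 by rewrite gt_eqF // ffm_gt0 // ltnW.
have h2 : m%:R - (a + b)%:R != 0 :> R by rewrite subr_eq0 eqr_nat; lia.
rewrite natrD in h2 *; rewrite /rr; field; rewrite ?h1 ?h2 //.
Qed.

Lemma hh_step u : (u < m)%N -> (m - u)%:R * hh u.+1 0 = (rr - u%:R) * hh u 0.
Proof.
move=> hu; rewrite /hh !addn0 ffS ff0 !mulr1 ffS.
have h1 : ff m%:R u != 0 by rewrite gt_eqF // ffm_gt0 // ltnW.
have h2 : m%:R - u%:R != 0 :> R by rewrite subr_eq0 eqr_nat; lia.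
rewrite natrB ?(ltnW hu) //; field; rewrite ?h1 ?h2 //.
Qed.

Lemma hh_ge0 a b : (2 * a <= m.+1)%N -> (2 * b <= m.+1)%N -> (a + b <= m)%N -> 0 <= hh a b.
Proof.
move=> ha hb hab; rewrite /hh ltW // divr_gt0 ?mulr_gt0 ?ffr_gt0 ?ffm_gt0 //.
Qed.

Lemma hh00 : hh 0 0 = 1.
Proof. by rewrite /hh addn0 !ff0 divr1 mulr1. Qed.

End Core.


Section Cube.
Variable R : realFieldType.
Variable m : nat.
Notation hh := (@hh R m).
Notation rr := (@rr R m).

Definition lam (x : {set 'I_m}) := hh #|x| (m - #|x|).
Definition Lf (phi : {set 'I_m} -> R) := \sum_x lam x * phi x.
Definition mono (U x : {set 'I_m}) : R := (U \subset x)%:R.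

Lemma dummy_aux : True. Proof. by []. Qed.
Lemma disj_card (A B : {set 'I_m}) : A \subset ~: B -> #|A :|: B| = (#|A| + #|B|)%N.
Proof.
move=> hAB; have := cardsUI A B.
suff -> : A :&: B = set0 by rewrite cards0 addn0.
apply/setP=> j; rewrite !inE; apply/negbTE/negP=> /andP[ja jb].
by move/subsetP: hAB => /(_ j ja); rewrite inE jb.
Qed.

Lemma marg k : forall A B : {set 'I_m}, A \subset ~: B -> (#|A :|: B| + k = m)%N ->
  \sum_x lam x * ((A \subset x)%:R * (B \subset ~: x)%:R) = hh #|A| #|B|.
Proof.
elim: k => [|k IH] A B hAB hk.
  have hT : A :|: B = setT.
    apply/eqP; rewrite eqEcard subsetT cardsT card_ord; lia.
  rewrite (bigD1 A) //= subxx mul1r.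
  have -> : B \subset ~: A.
    apply/subsetP=> j jB; rewrite inE; apply/negP=> jA.
    by move/subsetP: hAB => /(_ j jA); rewrite inE jB.
  rewrite mulr1 big1 ?addr0.
    rewrite /lam; congr hh; move: (disj_card hAB) => e; rewrite addn0 e in hk; by rewrite -[X in (X - _)%N]hk addKn.
  move=> x hx; case hAx: (A \subset x); case hBx: (B \subset ~: x); rewrite /= ?(mulr0n, mulr0, mul0r) //.
  exfalso; move/negP: hx; apply; rewrite eqEsubset hAx andbT.
  apply/subsetP=> j jx.
  have : j \in A :|: B by rewrite hT inE.
  rewrite inE => /orP[//|jB].
  by move/subsetP: hBx => /(_ j jB); rewrite inE jx.
have [i hi] : exists i, i \in ~: (A :|: B).
  apply/set0Pn; rewrite -card_gt0; have := cardsC (A :|: B); rewrite card_ord; lia.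
move: hi; rewrite !inE negb_or => /andP[iA iB].
have e1 : forall x : {set 'I_m}, (A \subset x)%:R * (B \subset ~: x)%:R =
   ((i |: A) \subset x)%:R * (B \subset ~: x)%:R +
   (A \subset x)%:R * ((i |: B) \subset ~: x)%:R :> R.
  move=> x; rewrite !subUset !sub1set inE.
  by case: (i \in x); case: (A \subset x); case: (B \subset ~: x); rewrite /= ?mulr0 ?mul0r ?addr0 ?add0r ?mulr1.
under eq_bigr do rewrite e1 mulrDr.
rewrite big_split /=.
have cU : #|(i |: A) :|: B| = #|A :|: B|.+1.
  by rewrite -setUA cardsU1 inE negb_or iA iB.
have cU' : #|A :|: (i |: B)| = #|A :|: B|.+1.
  by rewrite setUCA cardsU1 inE negb_or iA iB.
rewrite IH; last by rewrite cU; lia.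
- rewrite IH; last by rewrite cU'; lia.
  + rewrite !cardsU1 iA iB /= !add1n -hh_rec //.
    have aux : forall a b c k m : nat, c = (a + b)%N -> (c + k.+1)%N = m -> (a + b < m)%N by move=> *; lia.
    exact: aux (disj_card hAB) hk.
  + apply/subsetP=> j jA; rewrite !inE negb_or; apply/andP; split.
      by apply/eqP=> ej; move: iA; rewrite -ej jA.
    by move/subsetP: hAB => /(_ j jA); rewrite inE.
- rewrite subUset sub1set inE iB /=.
  done.
Qed.

End Cube.


Lemma addn_subKl a b c : (a + b = c)%N -> b = (c - a)%N.
Proof. by move<-; rewrite addKn. Qed.

Section Span.
Variable R : realFieldType.
Variable m : nat.
Notation hh := (@hh R m).
Notation rr := (@rr R m).
Notation Lf := (@Lf R m).
Notation mono := (@mono R m).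
Implicit Types (U V x : {set 'I_m}).

Lemma Lmono (U : {set 'I_m}) : Lf (mono U) = hh #|U| 0.
Proof.
have h := @marg R m (m - #|U|) U set0.
rewrite cards0 in h; rewrite -h ?sub0set //.
  by apply: eq_bigr => x _; rewrite sub0set mulr1.
  by rewrite setC0 subsetT.
by rewrite setU0 subnKC // -[X in (_ <= X)%N](card_ord m) max_card.
Qed.

Lemma Lf_sum (I : finType) (P : pred I) (F : I -> {set 'I_m} -> R) :
  Lf (fun x => \sum_(i | P i) F i x) = \sum_(i | P i) Lf (F i).
Proof.
rewrite /Lf exchange_big /=; apply: eq_bigr => x _; by rewrite mulr_sumr.
Qed.

Lemma Lf_scale c f : Lf (fun x => c * f x) = c * Lf f.
Proof. by rewrite /Lf mulr_sumr; apply: eq_bigr => x _; rewrite mulrCA. Qed.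

Lemma Lf_add f g : Lf (fun x => f x + g x) = Lf f + Lf g.
Proof. by rewrite /Lf -big_split; apply: eq_bigr => x _; rewrite mulrDr. Qed.

Lemma Lf_ext f g : (forall x, f x = g x) -> Lf f = Lf g.
Proof. by move=> e; rewrite /Lf; apply: eq_bigr => x _; rewrite e. Qed.

Lemma card_sum (x : {set 'I_m}) : (#|x|%:R : R) = \sum_i ((i \in x)%:R : R).
Proof. rewrite -sum1_card natr_sum big_mkcond; apply: eq_bigr => i _; by case: (i \in x). Qed.

Lemma null (U : {set 'I_m}) : (#|U| < m)%N -> Lf (fun x => (#|x|%:R - rr) * mono U x) = 0.
Proof.
move=> hU.
have e : forall x : {set 'I_m}, (#|x|%:R - rr) * mono U x = \sum_i mono (i |: U) x - rr * mono U x.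
  move=> x; rewrite mulrBl card_sum mulr_suml; congr (_ - _).
  apply: eq_bigr => i _; rewrite /mono subUset sub1set.
  by case: (i \in x); case: (U \subset x); rewrite /= ?mul1r ?mul0r.
rewrite (Lf_ext e).
have -> : Lf (fun x => \sum_i mono (i |: U) x - rr * mono U x) =
   Lf (fun x => \sum_i mono (i |: U) x) + Lf (fun x => (- rr) * mono U x).
  by rewrite -Lf_add; apply: Lf_ext => x; rewrite mulNr.
rewrite Lf_scale Lf_sum Lmono.
under eq_bigr do rewrite Lmono cardsU1.
rewrite (bigID (fun i => i \in U)) /=.
under eq_bigr => i iU do rewrite iU /= add0n.
under [X in _ + X + _]eq_bigr => i iU do rewrite iU /= add1n.
rewrite !sumr_const.
rewrite (_ : #|(fun i : 'I_m => i \notin U)| = (m - #|U|)%N); last first.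
  exact: addn_subKl (etrans (cardC (mem U)) (card_ord m)).
rewrite -[hh #|U|.+1 0 *+ _]mulr_natl hh_step // -[hh #|U| 0 *+ _]mulr_natl; ring.
Qed.

Definition Span lo d (phi : {set 'I_m} -> R) :=
  exists p : {set 'I_m} -> R, (forall U, p U != 0 -> (lo <= #|U| <= d)%N) /\
     forall x, phi x = \sum_U p U * mono U x.

Lemma Span_ext lo d f g : Span lo d f -> (forall x, f x = g x) -> Span lo d g.
Proof. by move=> [p [hp ep]] e; exists p; split => // x; rewrite -e. Qed.

Lemma Span0 lo d : Span lo d (fun _ => 0).
Proof.
exists (fun _ => 0); split => [U|x]; first by rewrite eqxx.
by rewrite big1 // => U _; rewrite mul0r.
Qed.

Lemma Span_mono lo d U : (lo <= #|U| <= d)%N -> Span lo d (mono U).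
Proof.
move=> hU; exists (fun V => (V == U)%:R); split => [V|x].
  move=> hV; case: (V =P U) => [-> //|/eqP/negbTE e]; by rewrite e mulr0n eqxx in hV.
rewrite (bigD1 U) //= eqxx mul1r big1 ?addr0 // => V /negbTE ->; by rewrite mul0r.
Qed.

Lemma Span_add lo d f g : Span lo d f -> Span lo d g -> Span lo d (fun x => f x + g x).
Proof.
move=> [p [hp ep]] [q [hq eq]]; exists (fun U => p U + q U); split => [U|x].
  move=> hpq; case: (p U =P 0) => [e|/eqP]; last exact: hp.
  by move: hpq; rewrite e add0r; exact: hq.
by rewrite ep eq -big_split; apply: eq_bigr => U _; rewrite mulrDl.
Qed.

Lemma Span_scale lo d c f : Span lo d f -> Span lo d (fun x => c * f x).
Proof.
move=> [p [hp ep]]; exists (fun U => c * p U); split => [U|x].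
  by rewrite mulf_eq0 negb_or => /andP[_ /hp].
by rewrite ep mulr_sumr; apply: eq_bigr => U _; rewrite mulrA.
Qed.

Lemma Span_sum_seq lo d (I : Type) (s : seq I) (P : pred I) (F : I -> {set 'I_m} -> R) :
  (forall i, P i -> Span lo d (F i)) -> Span lo d (fun x => \sum_(i <- s | P i) F i x).
Proof.
move=> hF; elim: s => [|i s IH].
  by eapply Span_ext; first exact: (Span0 lo d); move=> x; rewrite big_nil.
case hi: (P i).
  by eapply Span_ext; first exact: (Span_add (hF i hi) IH); move=> x; rewrite big_cons hi.
by eapply Span_ext; first exact: IH; move=> x; rewrite big_cons hi.
Qed.

Lemma Span_sum lo d (I : finType) (P : pred I) (F : I -> {set 'I_m} -> R) :
  (forall i, P i -> Span lo d (F i)) -> Span lo d (fun x => \sum_(i | P i) F i x).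
Proof. exact: Span_sum_seq. Qed.

Lemma Span_weaken lo d lo' d' f : (lo' <= lo)%N -> (d <= d')%N -> Span lo d f -> Span lo' d' f.
Proof.
move=> h1 h2 [p [hp ep]]; exists p; split => // U /hp /andP[a b].
by rewrite (leq_trans h1 a) (leq_trans b h2).
Qed.

Lemma mono_mul U V x : mono U x * mono V x = mono (U :|: V) x.
Proof. by rewrite /mono subUset; case: (U \subset x); case: (V \subset x); rewrite /= ?mul1r ?mul0r. Qed.

Lemma Span_mul d1 d2 f g : Span 0 d1 f -> Span 0 d2 g -> Span 0 (d1 + d2) (fun x => f x * g x).
Proof.
move=> [p [hp ep]] [q [hq eq]].
apply: (@Span_ext _ _ (fun x => \sum_U \sum_V (p U * q V) * mono (U :|: V) x)); last first.
  move=> x; rewrite ep eq mulr_suml; apply: eq_bigr => U _.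
  rewrite mulr_sumr; apply: eq_bigr => V _; rewrite -mono_mul; ring.
apply: Span_sum => U _; apply: Span_sum => V _.
case: (p U =P 0) => [e|/eqP pU].
  by eapply Span_ext; first exact: (Span0 _ _); move=> x; rewrite e !mul0r.
case: (q V =P 0) => [e|/eqP qV].
  by eapply Span_ext; first exact: (Span0 _ _); move=> x; rewrite e mulr0 mul0r.
apply: Span_scale; apply: Span_mono.
move/hp: pU => /andP[_ a]; move/hq: qV => /andP[_ b].
by rewrite leq0n /= (leq_trans (leq_card_setU U V)) // leq_add.
Qed.

Lemma null_span d f : Span 0 d f -> (d < m)%N -> Lf (fun x => (#|x|%:R - rr) * f x) = 0.
Proof.
move=> [p [hp ep]] hd.
rewrite (@Lf_ext _ (fun x => \sum_U p U * ((#|x|%:R - rr) * mono U x))); last first.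
  by move=> x; rewrite ep mulr_sumr; apply: eq_bigr => U _; rewrite mulrCA.
rewrite Lf_sum big1 // => U _; rewrite Lf_scale.
case: (p U =P 0) => [->|/eqP /hp /andP[_ hU]]; first by rewrite mul0r.
by rewrite null ?mulr0 // (leq_ltn_trans hU).
Qed.

End Span.


Section Gram.
Variable R : realFieldType.
Variable m : nat.
Notation hh := (@hh R m).
Notation rr := (@rr R m).
Notation Lf := (@Lf R m).
Notation mono := (@mono R m).
Notation Span := (@Span R m).
Implicit Types (U V x T : {set 'I_m}).

Lemma hsum i : forall a b, (a + b + i <= m)%N ->
  \sum_(j < i.+1) ('C(i, j))%:R * hh (a + (i - j)) (b + j) = hh a b.
Proof.
elim: i => [|i IH] a b hab.
  by rewrite big_ord_recl big_ord0 bin0 addr0 mul1r !addn0.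
rewrite big_ord_recl bin0 mul1r subn0.
under eq_bigr do rewrite lift0 binS natrD mulrDl subSS.
rewrite big_split /=.
have e2 : \sum_(j < i.+1) ('C(i, j))%:R * hh (a + (i - j)) (b + j.+1) = hh a b.+1.
  rewrite -(IH a b.+1); last by lia.
  by apply: eq_bigr => j _; rewrite addnS addSn.
rewrite e2.
have e1 := IH a.+1 b.
rewrite big_ord_recl bin0 mul1r subn0 addn0 in e1.
rewrite big_ord_recr /= bin_small // mul0r addr0.
have e3 : \sum_(j < i) ('C(i, j.+1))%:R * hh (a + (i - j)) (b + j.+1) =
          \sum_(j < i) ('C(i, (lift ord0 j)))%:R * hh (a.+1 + (i - lift ord0 j)) (b + lift ord0 j).
  apply: eq_bigr => j _; rewrite lift0; congr (_ * hh _ _).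
  have := ltn_ord j; lia.
rewrite e3 addrA addn0 addnS -addSn e1; last by lia.
rewrite -hh_rec //; lia.
Qed.


Lemma card_sumR (T : finType) (S : {set T}) : (#|S|%:R : R) = \sum_i ((i \in S)%:R : R).
Proof. rewrite -sum1_card natr_sum big_mkcond; apply: eq_bigr => i _; by case: (i \in S). Qed.

Lemma cnt_sub (C : {set 'I_m}) (j : nat) :
  \sum_(U : {set 'I_m}) ((#|U| == j) && (U \subset C))%:R = ('C(#|C|, j))%:R :> R.
Proof.
rewrite -cards_draws card_sumR; apply: eq_bigr => U _; by rewrite inE andbC.
Qed.

Lemma sum_bin_widen (F : nat -> R) i n : (i < n)%N ->
  \sum_(j < n) ('C(i, j))%:R * F j = \sum_(j < i.+1) ('C(i, j))%:R * F j.
Proof.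
move=> hin; rewrite (big_ord_widen n (fun j => ('C(i, j))%:R * F j) hin) [RHS]big_mkcond /=.
apply: eq_bigr => j _; case: ltnP => // h; by rewrite bin_small // mul0r.
Qed.

Lemma pair_ident d (T T' : {set 'I_m}) : #|T| = d -> #|T'| = d -> (2 * d <= m)%N ->
  \sum_(j < d.+1) hh (2 * d - j) j *
     \sum_(U : {set 'I_m}) ((#|U| == j) && (U \subset T) && (U \subset T'))%:R = hh #|T :|: T'| 0.
Proof.
move=> hT hT' hd.
under eq_bigr do under eq_bigr do rewrite -andbA -subsetI.
under eq_bigr do rewrite cnt_sub mulrC.
have hi : (#|T :&: T'| <= d)%N by rewrite -hT subset_leq_card // subsetIl.
rewrite (@sum_bin_widen (fun j => hh (2 * d - j) j)) //.
have hu : #|T :|: T'| = (2 * d - #|T :&: T'|)%N.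
  have := cardsUI T T'; rewrite hT hT'; lia.
rewrite hu -(@hsum #|T :&: T'| (2 * d - #|T :&: T'|) 0); last by lia.
apply: eq_bigr => j _; congr (_ * hh _ _); have := ltn_ord j; lia.
Qed.

End Gram.


Section Gram2.
Variable R : realFieldType.
Variable m : nat.
Notation hh := (@hh R m).
Notation rr := (@rr R m).
Notation Lf := (@Lf R m).
Notation mono := (@mono R m).
Notation Span := (@Span R m).
Implicit Types (U V x T : {set 'I_m}).

Lemma sq_sum (I : finType) (a : I -> R) : (\sum_i a i) ^+ 2 = \sum_i \sum_j a i * a j.
Proof. by rewrite expr2 mulr_suml; apply: eq_bigr => i _; rewrite mulr_sumr. Qed.

Lemma gram d (q : {set 'I_m} -> R) : (forall T, q T != 0 -> #|T| = d) -> (4 * d <= m.+1)%N ->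
  0 <= Lf (fun x => (\sum_T q T * mono T x) ^+ 2).
Proof.
move=> hq hd.
have step1 : Lf (fun x => (\sum_T q T * mono T x) ^+ 2) =
    \sum_T \sum_(T' : {set 'I_m}) q T * q T' * hh #|T :|: T'| 0.
  rewrite (@Lf_ext _ _ _ (fun x => \sum_T \sum_(T' : {set 'I_m}) (q T * q T') * mono (T :|: T') x)); last first.
    move=> x; rewrite sq_sum; apply: eq_bigr => T _; apply: eq_bigr => T' _.
    by rewrite -mono_mul; ring.
  rewrite Lf_sum; apply: eq_bigr => T _; rewrite Lf_sum; apply: eq_bigr => T' _.
  by rewrite Lf_scale Lmono.
have step2 : \sum_T \sum_(T' : {set 'I_m}) q T * q T' * hh #|T :|: T'| 0 =
   \sum_(j < d.+1) hh (2 * d - j) j * \sum_(U : {set 'I_m}) (#|U| == j)%:R *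
      (\sum_T q T * (U \subset T)%:R) ^+ 2.
  have e : forall T T', q T * q T' * hh #|T :|: T'| 0 =
      \sum_(j < d.+1) \sum_(U : {set 'I_m}) hh (2 * d - j) j * (#|U| == j)%:R *
         ((q T * (U \subset T)%:R) * (q T' * (U \subset T')%:R)).
    move=> T T'.
    case: (q T =P 0) => [->|/eqP /hq hT].
      by rewrite !mul0r big1 // => j _; rewrite big1 // => U _; rewrite !mul0r mulr0.
    case: (q T' =P 0) => [->|/eqP /hq hT'].
      by rewrite mulr0 mul0r big1 // => j _; rewrite big1 // => U _; rewrite mul0r !mulr0.
    rewrite -(@pair_ident R m d T T') //; last by lia.
    rewrite mulr_sumr; apply: eq_bigr => j _; rewrite !mulr_sumr; apply: eq_bigr => U _.
    by case: (#|U| == j); case: (U \subset T); case: (U \subset T'); rewrite /= ?mulr0n ?mulr1n; ring.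
  under eq_bigr do under eq_bigr do rewrite e.
  under eq_bigr => T _ do rewrite exchange_big /=.
  under eq_bigr => T _ do under eq_bigr => j _ do rewrite exchange_big /=.
  rewrite exchange_big /=.
  under eq_bigr => j _ do rewrite exchange_big /=.
  apply: eq_bigr => j _; rewrite mulr_sumr; apply: eq_bigr => U _.
  rewrite sq_sum !mulr_sumr; apply: eq_bigr => T _; rewrite !mulr_sumr; apply: eq_bigr => T' _; ring.
rewrite step1 step2; apply: sumr_ge0 => j _.
apply: mulr_ge0; first by apply: hh_ge0; have := ltn_ord j; lia.
apply: sumr_ge0 => U _; apply: mulr_ge0; [by case: (_ == _)| exact: sqr_ge0].
Qed.

End Gram2.


Section Lift.
Variable R : realFieldType.
Variable m : nat.
Hypothesis m_odd : odd m.
Notation hh := (@hh R m).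
Notation rr := (@rr R m).
Notation Lf := (@Lf R m).
Notation mono := (@mono R m).
Notation Span := (@Span R m).
Implicit Types (U V x T : {set 'I_m}).

Lemma rr_neq s : rr - s%:R != 0.
Proof.
rewrite subr_eq0; apply/eqP => h.
have : (m%:R : R) = (2 * s)%:R by rewrite natrM -h /rr; field.
move/eqP; rewrite eqr_nat => /eqP hm; move: m_odd; rewrite hm; lia.
Qed.

Lemma sum_notin U x : \sum_(i | i \notin U) mono (i |: U) x = mono U x * (#|x|%:R - #|U|%:R).
Proof.
case hU: (U \subset x); last first.
  rewrite /mono hU mul0r big1 // => i _; rewrite subUset hU andbF //.
rewrite /mono hU mul1r.
have -> : \sum_(i | i \notin U) ((i |: U) \subset x)%:R = \sum_(i | i \notin U) ((i \in x)%:R : R).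
  by apply: eq_bigr => i _; rewrite subUset sub1set hU andbT.
rewrite (card_sum R x) [in RHS](bigID (fun i => i \in U)) /=.
have -> : \sum_(i | i \in U) ((i \in x)%:R : R) = #|U|%:R.
  rewrite (eq_bigr (fun _ => 1)); last by move=> i iU; rewrite (subsetP hU i iU).
  by rewrite sumr_const; congr (_%:R); apply: eq_card.
by rewrite addrC addrK.
Qed.

Lemma lift_k d : (2 * d < m)%N -> forall k phi, (k <= d)%N -> Span (d - k) d phi ->
  exists psi, Span d d psi /\ Lf (fun x => phi x ^+ 2) = Lf (fun x => psi x ^+ 2).
Proof.
move=> hd; elim=> [|k IH] phi hk hphi.
  by exists phi; split => //; rewrite subn0 in hphi.
set s := (d - k.+1)%N.
have hs : (d - k = s.+1)%N by rewrite /s; lia.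
case: hphi => p [hp ep].
set phis := fun x => \sum_(U : {set 'I_m}) (if #|U| == s then p U else 0) * mono U x.
set phir := fun x => \sum_(U : {set 'I_m}) (if #|U| == s then 0 else p U) * mono U x.
set c := (rr - s%:R)^-1.
set phi' := fun x => phir x + \sum_(U : {set 'I_m}) (if #|U| == s then p U * c else 0) *
                 \sum_(i | i \notin U) mono (i |: U) x.
have Sphi' : Span (d - k) d phi'.
  rewrite hs; apply: Span_add.
    exists (fun U => if #|U| == s then 0 else p U); split => // U.
    case: ifP => [_|/eqP hne]; first by rewrite eqxx.
    by move/hp => /andP[a b]; rewrite b andbT ltn_neqAle a andbT eq_sym; apply/eqP.
  apply: Span_sum => U _; case: eqP => hU; last first.
    by eapply Span_ext; first exact: (Span0 _ _); move=> x; rewrite mul0r.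
  apply: Span_scale; apply: Span_sum => i hi; apply: Span_mono.
  rewrite cardsU1 hi hU add1n leqnn /=.
  by rewrite /s; lia.
have ephi : forall x, phi x = phis x + phir x.
  move=> x; rewrite ep /phis /phir -big_split; apply: eq_bigr => U _.
  by case: (_ == _); rewrite /= mul0r ?addr0 ?add0r.
have ephi' : forall x, phi' x = phir x + phis x * (#|x|%:R - s%:R) * c.
  move=> x; rewrite /phi'; congr (_ + _).
  rewrite /phis !mulr_suml; apply: eq_bigr => U _; rewrite sum_notin.
  case: eqP => [->|_]; first by ring.
  by rewrite !mul0r.
have key : forall x, phi x ^+ 2 = phi' x ^+ 2 +
     (- c) * ((#|x|%:R - rr) * (phis x * (phi x + phi' x))).
  move=> x; rewrite ephi' ephi /c.
  have := rr_neq s; move: (phis x) (phir x) (#|x|%:R : R) => A B S hne.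
  by field.
have Sprod : Span 0 (d + d) (fun x => phis x * (phi x + phi' x)).
  apply: Span_mul.
    exists (fun U => if #|U| == s then p U else 0); split => // U.
    case: ifP => [/eqP hU _|]; last by rewrite eqxx.
    by rewrite hU /s leq0n /=; lia.
  apply: Span_add.
    apply: (Span_weaken (lo:=(d - k.+1)%N) (d:=d)) => //.
    by exists p.
  by apply: (Span_weaken (lo:=(d - k)%N) (d:=d)).
have z := null_span Sprod ltac:(lia).
have [psi [Spsi epsi]] := IH phi' ltac:(lia) Sphi'.
exists psi; split => //; rewrite -epsi.
by rewrite (Lf_ext key) Lf_add Lf_scale z mulr0 addr0.
Qed.

Lemma psd_lemma d phi : (4 * d <= m.+1)%N -> Span 0 d phi -> 0 <= Lf (fun x => phi x ^+ 2).
Proof.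
move=> hd hphi.
have h2 : (2 * d < m)%N.
  case: d hd hphi => [|d] hd _; last by lia.
  by case: m m_odd.
have [psi [[q [hq eq]] ->]] := @lift_k d h2 d phi (leqnn d) ltac:(by rewrite subnn).
rewrite (@Lf_ext _ _ _ (fun x => (\sum_(U : {set 'I_m}) q U * mono U x) ^+ 2)); last by move=> x; rewrite eq.
apply: (@gram R m d) => // U /hq /andP [a b]; apply/eqP; by rewrite eqn_leq a b.
Qed.

End Lift.


Section Transfer.
Variable R : realType.
Variable m : nat.
Hypothesis m_odd : odd m.
Variable T : finType.
Variable litb : LPvar T -> {set 'I_m} -> bool.
Hypothesis lit_span : forall v, @Span R m 0 1 (fun x => (litb v x)%:R).
Notation hh := (@hh R m).
Notation rr := (@rr R m).
Notation Lf := (@Lf R m).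
Notation mono := (@mono R m).
Notation Span := (@Span R m).
Implicit Types (K I J : {set LPvar T}) (x : {set 'I_m}).

Definition ellb (K : {set LPvar T}) x := [forall v in K, litb v x].
Definition yy (K : {set LPvar T}) : R := Lf (fun x => (ellb K x)%:R).

Lemma ellbU I J x : ellb (I :|: J) x = ellb I x && ellb J x.
Proof.
apply/forall_inP/andP => [h|[/forall_inP h1 /forall_inP h2]].
  by split; apply/forall_inP => v hv; apply: h; rewrite inE hv ?orbT.
by move=> v; rewrite inE => /orP[/h1|/h2].
Qed.

Lemma ellb1 v K x : ellb (v |: K) x = litb v x && ellb K x.
Proof.
rewrite ellbU; congr (_ && _); apply/forall_inP/idP => [h|h w]; first by apply: h; rewrite inE.
by rewrite inE => /eqP ->.
Qed.

Lemma ellb0 x : ellb set0 x.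
Proof. by apply/forall_inP => v; rewrite inE. Qed.

Lemma ell_prod K x : ((ellb K x)%:R : R) = \prod_(v <- enum K) (litb v x)%:R.
Proof.
have : forall v, v \in enum K -> v \in K by move=> v; rewrite mem_enum.
have : forall v, v \in K -> v \in enum K by move=> v; rewrite mem_enum.
rewrite /ellb; move: (enum K) (enum_uniq K) => s _ h1 h2.
have -> : [forall v in K, litb v x] = all (fun v => litb v x) s.
  apply/forall_inP/allP => h v hv; first by apply: h; apply: h2.
  by apply: h; apply: h1.
elim: s {h1 h2} => [|v s IH]; first by rewrite big_nil.
by rewrite big_cons /= -IH; case: (litb v x); rewrite /= ?mul1r ?mulr0n ?mul0r.
Qed.

Lemma ell_span K : Span 0 #|K| (fun x => (ellb K x)%:R).
Proof.
have e := ell_prod K.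
eapply Span_ext; last by move=> x; rewrite e.
rewrite cardE; elim: (enum K) => [|v s IH] /=.
  eapply Span_ext; first by apply: (@Span_mono R m 0 0 set0); rewrite cards0.
  by move=> x; rewrite big_nil /mono sub0set.
eapply Span_ext; first exact: (Span_mul (lit_span v) IH).
by move=> x; rewrite big_cons.
Qed.

Lemma Lf1 : Lf (fun _ => 1) = 1.
Proof.
rewrite (@Lf_ext _ _ _ (mono set0)); last by move=> x; rewrite /mono sub0set.
by rewrite Lmono cards0 hh00.
Qed.

Lemma yy0 : yy set0 = 1.
Proof. by rewrite /yy (@Lf_ext _ _ _ (fun _ => 1)) ?Lf1 // => x; rewrite ellb0. Qed.

Lemma yy_psd t : (4 * t <= m.+1)%N -> psd_on (fun I => (#|I| <= t)%N) (fun I J => yy (I :|: J)).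
Proof.
move=> ht w.
have e : \sum_(I : {set LPvar T} | (#|I| <= t)%N) \sum_(J : {set LPvar T} | (#|J| <= t)%N) w I * yy (I :|: J) * w J =
   Lf (fun x => (\sum_(I : {set LPvar T} | (#|I| <= t)%N) w I * (ellb I x)%:R) ^+ 2).
  rewrite (@Lf_ext _ _ _ (fun x => \sum_(I : {set LPvar T} | (#|I| <= t)%N) \sum_(J : {set LPvar T} | (#|J| <= t)%N) (w I * w J) * (ellb (I :|: J) x)%:R)); last first.
    move=> x; rewrite expr2 mulr_suml; apply: eq_bigr => I _; rewrite mulr_sumr; apply: eq_bigr => J _.
    by rewrite ellbU -mulnb natrM; ring.
  rewrite Lf_sum; apply: eq_bigr => I _; rewrite Lf_sum; apply: eq_bigr => J _; rewrite Lf_scale /yy; ring.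
rewrite e; apply: (@psd_lemma R m m_odd t) => //.
apply: Span_sum => I hI; apply: Span_scale.
exact: Span_weaken (leqnn 0) hI (ell_span I).
Qed.

Lemma yy_box t K : (8 * t <= m.+1)%N -> (#|K| <= 2 * t)%N -> 0 <= yy K <= 1.
Proof.
move=> ht hK; apply/andP; split.
  rewrite /yy (@Lf_ext _ _ _ (fun x => (ellb K x)%:R ^+ 2)).
    apply: (@psd_lemma R m m_odd (2 * t)); first by lia.
    exact: Span_weaken (leqnn 0) hK (ell_span K).
  by move=> x; case: (ellb K x); rewrite ?expr1n ?expr0n.
rewrite -subr_ge0.
have -> : 1 - yy K = Lf (fun x => (1 - (ellb K x)%:R) ^+ 2).
  rewrite (@Lf_ext _ _ _ (fun x => 1 + (-1) * (ellb K x)%:R)); last first.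
    by move=> x; case: (ellb K x) => /=; ring.
  by rewrite Lf_add Lf_scale Lf1 /yy; ring.
apply: (@psd_lemma R m m_odd (2 * t)); first by lia.
apply: Span_add.
  eapply Span_ext; first by apply: (@Span_mono R m 0 (2 * t) set0); rewrite cards0.
  by move=> x; rewrite /mono sub0set.
eapply Span_ext; first exact: (Span_scale (-1) (Span_weaken (leqnn 0) hK (ell_span K))).
by move=> x /=; rewrite mulN1r.
Qed.

Definition Gf (g : linform R T) x := g.1 + \sum_v g.2 v * (litb v x)%:R.

Lemma lin_shift_eq g K : lin_shift g yy K = Lf (fun x => Gf g x * (ellb K x)%:R).
Proof.
rewrite /lin_shift /Gf /yy.
rewrite [RHS](@Lf_ext _ _ _ (fun x => g.1 * (ellb K x)%:R + \sum_v g.2 v * (ellb (v |: K) x)%:R)); last first.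
  move=> x; rewrite mulrDl mulr_suml; congr (_ + _); apply: eq_bigr => v _.
  by rewrite ellb1 -mulnb natrM mulrA.
rewrite Lf_add Lf_scale Lf_sum; congr (_ + _); apply: eq_bigr => v _; by rewrite Lf_scale.
Qed.

Lemma loc_zero t g (kap : R) : (2 * t < m)%N -> (forall x, Gf g x = kap * (#|x|%:R - rr)) ->
  psd_on (fun I => (#|I| <= t)%N) (fun I J => lin_shift g yy (I :|: J)).
Proof.
move=> ht hg w; rewrite big1 // => I hI; rewrite big1 // => J hJ.
rewrite lin_shift_eq (@Lf_ext _ _ _ (fun x => kap * ((#|x|%:R - rr) * (ellb (I :|: J) x)%:R))).
  rewrite Lf_scale (null_span (ell_span _)) ?mulr0 ?mul0r //.
  by apply: leq_ltn_trans (leq_card_setU I J) _; lia.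
by move=> x; rewrite hg mulrA.
Qed.

End Transfer.


Definition Q n := (('I_n * bool) * 'I_4)%type.
Lemma cardQ n : #|{: Q n}| = (8 * n)%N.
Proof. rewrite !card_prod !card_ord card_bool; lia. Qed.

Definition ee n (p : 'I_(8 * n)) : Q n := enum_val (cast_ord (esym (cardQ n)) p).
Definition einv n (q : Q n) : 'I_(8 * n) := cast_ord (cardQ n) (enum_rank q).
Lemma eeK n : cancel (@ee n) (@einv n).
Proof. by move=> p; rewrite /ee /einv enum_valK cast_ordKV. Qed.
Lemma einvK n : cancel (@einv n) (@ee n).
Proof. by move=> q; rewrite /ee /einv cast_ordK enum_rankK. Qed.

Lemma big_ee n (V : Type) (idx : V) (op : Monoid.com_law idx) (F : Q n -> V) :
  \big[op/idx]_(p : 'I_(8 * n)) F (ee p) = \big[op/idx]_(q : Q n) F q.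
Proof.
rewrite [RHS](reindex (@ee n)) //; exists (@einv n) => x _; [exact: eeK | exact: einvK].
Qed.

Lemma big_pairQ (I J : finType) (V : Type) (idx : V) (op : Monoid.com_law idx) (G : I * J -> V) :
  \big[op/idx]_(p : I * J) G p = \big[op/idx]_(i : I) \big[op/idx]_(j : J) G (i, j).
Proof. by rewrite pair_bigA; apply: eq_bigr => -[i j]. Qed.

Section Inst.
Variable R : realType.
Variable n : nat.
Hypothesis n_odd : odd n.
Variable D : R.
Hypothesis D1 : 1 < D.

Definition cl (p : 'I_(8 * n)) := (ee p).1.
Definition ps (p : 'I_(8 * n)) := (ee p).2.
Definition clit (c : 'I_n * bool) (x : {set 'I_n}) := if c.2 then c.1 \notin x else c.1 \in x.
Definition litb (v : LPvar 'I_(8 * n)) x :=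
  match v with inl p => (ps p == ord0) && clit (cl p) x | inr p => clit (cl p) x end.
Definition redQ (q : Q n) := if q.1.2 then q.2 == ord0 else q.2 != ord_max.
Definition Red := [set p : 'I_(8 * n) | redQ (ee p)].
Definition dist (p q : 'I_(8 * n)) : R := if p == q then 0 else if cl p == cl q then 1 else D.

Lemma clit_span c : @Span R n 0 1 (fun x => (clit c x)%:R).
Proof.
have h1 : (0 <= #|[set c.1]| <= 1)%N by rewrite cards1.
rewrite /clit; case: c.2.
  have s0 : @Span R n 0 1 (@mono R n set0) by apply: Span_mono; rewrite cards0.
  eapply Span_ext; first exact: (Span_add s0 (Span_scale (-1) (@Span_mono R n 0 1 [set c.1] h1))).
  by move=> x; rewrite /mono sub0set sub1set; case: (c.1 \in x) => /=; ring.
eapply Span_ext; first exact: (@Span_mono R n 0 1 [set c.1] h1).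
by move=> x; rewrite /mono sub1set.
Qed.

Lemma lit_span v : @Span R n 0 1 (fun x => (litb v x)%:R).
Proof.
case: v => p /=; last exact: clit_span.
case: (ps p == ord0) => /=; first exact: clit_span.
by eapply Span_ext; first exact: (Span0 R n 0 1).
Qed.

Lemma card_sumn (x : {set 'I_n}) : \sum_i ((i \notin x)%:R : R) = n%:R - #|x|%:R.
Proof.
rewrite (card_sum R x) (eq_bigr (fun i => 1 - (i \in x)%:R)); last by move=> i _; case: (i \in x) => /=; ring.
by rewrite sumrB sumr_const card_ord.
Qed.

Lemma sum_clit (x : {set 'I_n}) (a b : R) :
  \sum_(c : 'I_n * bool) (if c.2 then b else a) * (clit c x)%:R =
    a * #|x|%:R + b * (n%:R - #|x|%:R).
Proof.
rewrite big_pairQ -card_sumn (card_sum R x) !mulr_sumr -big_split; apply: eq_bigr => i _.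
rewrite big_bool /= /clit /=; ring.
Qed.

Lemma cnt4 (b : bool) : \sum_(k : 'I_4) ((if b then k == ord0 else k != ord_max)%:R : R) = if b then 1 else 3.
Proof. case: b; rewrite !big_ord_recl big_ord0 /=; lra. Qed.
Lemma cnt4' (b : bool) : \sum_(k : 'I_4) ((~~ (if b then k == ord0 else k != ord_max))%:R : R) = if b then 3 else 1.
Proof. case: b; rewrite !big_ord_recl big_ord0 /=; lra. Qed.

Lemma dist_le1 j i : (dist j i <= 1) = (cl j == cl i).
Proof.
rewrite /dist; case: eqP => [->|_]; first by rewrite eqxx ler01.
by case: (cl j == cl i); rewrite ?lexx // leNgt D1.
Qed.

End Inst.


Section Cons.
Variable R : realType.
Variable n : nat.
Variable D : R.
Hypothesis D1 : 1 < D.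

Lemma sum_pick (F : Q n -> R) (q0 : Q n) :
  \sum_(q : Q n) (q == q0)%:R * F q = F q0.
Proof.
rewrite (bigD1 q0) //= eqxx mul1r big1 ?addr0 // => q /negbTE ->; by rewrite mul0r.
Qed.

Lemma sum_k0 (c : 'I_n * bool) (x : {set 'I_n}) :
  \sum_(k : 'I_4) ((k == ord0) && clit c x)%:R = (clit c x)%:R :> R.
Proof.
rewrite (bigD1 ord0) //= big1 ?addr0 // => k /negbTE ->; by [].
Qed.

Lemma Gf_cover j x :
  Gf (@litb n) ((0 : R), fun v : LPvar 'I_(8 * n) => match v with
                          | inl i => if dist D j i <= 1 then 1 else 0
                          | inr j' => if j' == j then -1 else 0
                          end) x = 0.
Proof.
rewrite /Gf big_sumType /= add0r.
have e1 : forall i, (if dist D j i <= 1 then 1 else 0) * ((ps i == ord0) && clit (cl i) x)%:R =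
   (ee i == (cl j, ord0))%:R * (clit (cl j) x)%:R :> R.
  move=> i; rewrite (dist_le1 D1) /ps /cl.
  case: (ee i) => c k /=; rewrite xpair_eqE eq_sym.
  by case: (c =P (ee j).1) => [->|_]; case: (k == ord0); rewrite /= ?mul1r ?mul0r ?mulr0.
under eq_bigr do rewrite e1.
rewrite (big_ee _ (fun q => (q == (cl j, ord0))%:R * (clit (cl j) x)%:R)) sum_pick.
rewrite (bigD1 j) //= eqxx big1 ?addr0; first by ring.
by move=> i /negbTE ->; rewrite mul0r.
Qed.

Lemma Gf_k x :
  Gf (@litb n) (n%:R : R, fun v : LPvar 'I_(8 * n) => match v with inl _ => -1 | inr _ => 0 end) x = 0.
Proof.
rewrite /Gf big_sumType /=.
rewrite [X in _ + (_ + X)]big1 ?addr0; last by move=> i _; rewrite mul0r.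
under eq_bigr do rewrite mulN1r.
rewrite sumrN (big_ee _ (fun q => ((q.2 == ord0) && clit q.1 x)%:R)) /= big_pairQ /=.
under eq_bigr do rewrite sum_k0.
have h := @sum_clit R n x 1 1.
rewrite (eq_bigr (fun c => (if c.2 then 1 else 1) * (clit c x)%:R)) ?h; last by move=> c _; rewrite if_same mul1r.
ring.
Qed.

Lemma redQE (c : 'I_n * bool) k : redQ (c, k) = if c.2 then k == ord0 else k != ord_max.
Proof. by []. Qed.

Lemma cnt4Q (c : 'I_n * bool) : \sum_(k : 'I_4) ((redQ (c, k))%:R : R) = if c.2 then 1 else 3.
Proof. exact: (@cnt4 R c.2). Qed.
Lemma cnt4Q' (c : 'I_n * bool) : \sum_(k : 'I_4) ((~~ redQ (c, k))%:R : R) = if c.2 then 3 else 1.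
Proof. exact: (@cnt4' R c.2). Qed.

Lemma Gf_red x :
  Gf (@litb n) (- (2 * n)%:R : R, fun v : LPvar 'I_(8 * n) => match v with
                                  | inl _ => 0
                                  | inr j => if j \in Red n then 1 else 0 end) x =
  2 * (#|x|%:R - rr R n).
Proof.
rewrite /Gf big_sumType /=.
rewrite [X in _ + (X + _)]big1 ?add0r; last by move=> i _; rewrite mul0r.
have e1 : forall j, (if j \in Red n then 1 else 0) * (clit (cl j) x)%:R =
   (redQ (ee j))%:R * (clit (ee j).1 x)%:R :> R.
  by move=> j; rewrite inE /cl; case: (redQ _); rewrite ?mul1r ?mul0r.
under eq_bigr do rewrite e1.
rewrite (big_ee _ (fun q => (redQ q)%:R * (clit q.1 x)%:R)) big_pairQ /=.
under eq_bigr => c _ do rewrite -mulr_suml cnt4Q.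
by rewrite (@sum_clit R n x 3 1) /rr natrM; field.
Qed.

Lemma Gf_blue x :
  Gf (@litb n) (- (2 * n)%:R : R, fun v : LPvar 'I_(8 * n) => match v with
                                  | inl _ => 0
                                  | inr j => if j \in Red n then 0 else 1 end) x =
  (-2) * (#|x|%:R - rr R n).
Proof.
rewrite /Gf big_sumType /=.
rewrite [X in _ + (X + _)]big1 ?add0r; last by move=> i _; rewrite mul0r.
have e1 : forall j, (if j \in Red n then 0 else 1) * (clit (cl j) x)%:R =
   (~~ redQ (ee j))%:R * (clit (ee j).1 x)%:R :> R.
  by move=> j; rewrite inE /cl; case: (redQ _); rewrite ?mul1r ?mul0r.
under eq_bigr do rewrite e1.
rewrite (big_ee _ (fun q => (~~ redQ q)%:R * (clit q.1 x)%:R)) big_pairQ /=.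
under eq_bigr => c _ do rewrite -mulr_suml cnt4Q'.
by rewrite (@sum_clit R n x 1 3) /rr natrM; field.
Qed.

End Cons.


Section Main.
Variable R : realType.
Variable n : nat.
Variable D : R.
Hypothesis D1 : 1 < D.

Lemma dist_ge0 (p q : 'I_(8 * n)) : 0 <= dist D p q.
Proof. have := D1; rewrite /dist; case: (p == q) => //; case: (_ == _) => //; lra. Qed.

Lemma dist_ge1 (p q : 'I_(8 * n)) : p != q -> 1 <= dist D p q.
Proof. have := D1; by rewrite /dist => ? /negbTE ->; case: (_ == _) => //; lra. Qed.

Lemma dist_D (p q : 'I_(8 * n)) : cl p != cl q -> dist D p q = D.
Proof.
move=> h; rewrite /dist (negbTE h); case: eqP => // e; by rewrite e eqxx in h.
Qed.

Lemma metric : is_metric (dist D : 'I_(8 * n) -> 'I_(8 * n) -> R).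
Proof.
have hD1 := D1.
split.
- exact: dist_ge0.
- move=> x y; split => [|->]; last by rewrite /dist eqxx.
  rewrite /dist; case: eqP => // _; case: (_ == _) => h; exfalso; lra.
- by move=> x y; rewrite /dist eq_sym [cl y == _]eq_sym.
- move=> x y z.
  case: (x =P z) => [->|nxz].
    by rewrite {1}/dist eqxx addr_ge0 ?dist_ge0.
  case: (cl x =P cl z) => [exz|nexz].
    have -> : dist D x z = 1 by rewrite /dist (introF eqP nxz) exz eqxx.
    case: (x =P y) => [exy|nxy].
      rewrite -exy; have := dist_ge1 (introN eqP nxz); have := dist_ge0 x x; lra.
    have := dist_ge1 (introN eqP nxy); have := dist_ge0 y z; lra.
  rewrite dist_D; last by apply/eqP.
  case: (cl x =P cl y) => [exy|nexy].
    rewrite (@dist_D y z); last by rewrite -exy; apply/eqP.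
    have := dist_ge0 x y; lra.
  rewrite (@dist_D x y); last by apply/eqP.
  have := dist_ge0 y z; lra.
Qed.

Lemma card_sum_nat (T : finType) (A : {set T}) : #|A| = (\sum_p (p \in A : nat))%N.
Proof. rewrite -sum1_card big_mkcond; apply: eq_bigr => p _; by case: (p \in A). Qed.

Lemma cnt4n (b : bool) : (\sum_(k : 'I_4) ((if b then k == ord0 else k != ord_max) : nat) = if b then 1 else 3)%N.
Proof. by case: b; rewrite !big_ord_recl big_ord0 /=. Qed.
Lemma cnt4n' (b : bool) : (\sum_(k : 'I_4) ((~~ (if b then k == ord0 else k != ord_max)) : nat) = if b then 3 else 1)%N.
Proof. by case: b; rewrite !big_ord_recl big_ord0 /=. Qed.

Lemma count_red (S : {set 'I_n * bool}) (P : bool -> 'I_4 -> bool) (f : bool -> nat) :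
  (forall b, \sum_(k : 'I_4) (P b k : nat) = f b)%N ->
  #|[set p : 'I_(8 * n) | (cl p \in S) && P (cl p).2 (ps p)]| = (\sum_(c in S) f c.2)%N.
Proof.
move=> hf; rewrite card_sum_nat.
under eq_bigr do rewrite inE.
rewrite (big_ee _ (fun q => ((q.1 \in S) && P q.1.2 q.2 : nat))) big_pairQ /= [RHS]big_mkcond /=.
apply: eq_bigr => c _; case: (c \in S) => /=; last by rewrite big1.
exact: hf.
Qed.

Lemma infeas : odd n -> forall (C : {set 'I_(8 * n)}) (rho : R),
  is_solution (dist D) (Red n) n (2 * n) (2 * n) C rho -> D <= rho.
Proof.
have hD1 := D1.
move=> hodd C rho [hC hr hb]; rewrite leNgt; apply/negP => hrho.
set S := [set cl c | c in C].
have hS : (#|S| <= n)%N by apply: leq_trans (leq_imset_card _ _) hC.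
have sub : covered (dist D) C rho \subset [set p | cl p \in S].
  apply/subsetP => p /bigcupP [c cC]; rewrite !inE => hcp.
  have e : cl c = cl p.
    apply/eqP; apply/negPn/negP => h; move: hcp; rewrite dist_D //; lra.
  by rewrite -e; apply/imsetP; exists c.
have e1 : [set p | cl p \in S] :&: Red n =
   [set p : 'I_(8 * n) | (cl p \in S) && (fun b k => if b then k == ord0 else k != ord_max) (cl p).2 (ps p)].
  by apply/setP => p; rewrite !inE.
have e2 : [set p | cl p \in S] :&: ~: Red n =
   [set p : 'I_(8 * n) | (cl p \in S) && (fun b k => ~~ (if b then k == ord0 else k != ord_max)) (cl p).2 (ps p)].
  by apply/setP => p; rewrite !inE.
have r1 : (#|covered (dist D) C rho :&: Red n| <= \sum_(c in S) (if c.2 then 1 else 3))%N.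
  rewrite -(count_red _ cnt4n) -e1; apply: subset_leq_card; exact: setSI.
have r2 : (#|covered (dist D) C rho :&: ~: Red n| <= \sum_(c in S) (if c.2 then 3 else 1))%N.
  rewrite -(count_red _ cnt4n') -e2; apply: subset_leq_card; exact: setSI.
set a := (\sum_(c in S) (~~ c.2 : nat))%N.
set b := (\sum_(c in S) (c.2 : nat))%N.
have ea : (\sum_(c in S) (if c.2 then 1 else 3) = 3 * a + b)%N.
  rewrite /a /b big_distrr -big_split; apply: eq_bigr => c _; by case: c.2.
have eb : (\sum_(c in S) (if c.2 then 3 else 1) = a + 3 * b)%N.
  rewrite /a /b big_distrr -big_split; apply: eq_bigr => c _; by case: c.2.
have eab : (a + b = #|S|)%N.
  rewrite /a /b -big_split -sum1_card; apply: eq_bigr => c _; by case: c.2.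
rewrite ea in r1; rewrite eb in r2.
have := odd_double_half n; rewrite hodd.
move: hr hb r1 r2 eab hS; rewrite -!mul2n.
move: #|covered _ _ _ :&: Red n| #|covered _ _ _ :&: ~: Red n| #|S| => u v w.
lia.
Qed.

End Main.


Lemma Gf_cases (R : realType) n (D : R) : 1 < D -> forall g,
  List.In g (LP1_constraints (dist D) (Red n) n (2 * n) (2 * n)) ->
  exists kap : R, forall x, Gf (@litb n) g x = kap * (#|x|%:R - rr R n).
Proof.
move=> hD g; rewrite /LP1_constraints => /List.in_app_iff [/List.in_map_iff [j [<- _]] | ].
  by exists 0 => x; rewrite mul0r; exact: Gf_cover.
rewrite /= => -[<-|[<-|[<-|[]]]].
- by exists 0 => x; rewrite mul0r; exact: Gf_k.
- by exists 2 => x; exact: Gf_red.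
- by exists (-2) => x; exact: Gf_blue.
Qed.

Theorem theorem5 (R : realType) :
  exists c : R, 0 < c /\
  forall (n : nat), odd n -> (0 < n)%N ->
  forall D : R, 1 < D ->
  exists (d : 'I_(8 * n) -> 'I_(8 * n) -> R) (Red : {set 'I_(8 * n)}),
    is_metric d /\
    (forall (C : {set 'I_(8 * n)}) (rho : R),
        is_solution d Red n (2 * n) (2 * n) C rho -> D <= rho) /\
    (forall t : nat, (1 <= t)%N -> t%:R <= c * n%:R ->
        SoS_nonempty t (LP1_constraints d Red n (2 * n) (2 * n))).
Proof.
exists (1 / 8); split; first by rewrite divr_gt0.
move=> n hodd hn D hD; exists (dist D), (Red n); split; first exact: metric.
split; first exact: infeas.
move=> t ht htc.
have h8 : (8 * t <= n)%N.
  rewrite -(ler_nat R) natrM; lra.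
exists (yy R (@litb n)); split.
- exact: yy0.
- by move=> I hI; apply: (yy_box hodd (@lit_span R n) (t := t)) => //; lia.
- by apply: (yy_psd hodd (@lit_span R n)); lia.
- move=> g hg; have [kap hk] := Gf_cases hD hg.
  by apply: (loc_zero hodd (@lit_span R n) (kap := kap)) => //; lia.
Qed.
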